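(* Let $T$ be a ditree and let $S$ be a source set or a sink set of $T$. Then every geodetic set of $T$ contains at least one vertex of $S$.
   Context: All digraphs are finite, without loops or parallel arcs. The underlying undirected graph of a digraph is obtained by forgetting orientations and deleting parallel edges. A ditree is a digraph whose underlying undirected graph is a tree (it may contain $2$-cycles, i.e., pairs of opposite arcs $uv,vu$). For $S\subseteq V(D)$, $N^-(S)$ (resp. $N^+(S)$) is the set of vertices outside $S$ having an arc to (resp. from) some vertex of $S$. A source set is a maximal strongly connected component $S$ of $D$ with $N^-(S)\setminus S=\emptyset$; a sink set is a maximal strongly connected component $S$ with $N^+(S)\setminus S=\emptyset$. For vertices $u,v$, $I(u,v)$ is the set of vertices lying on some shortest directed path from $u$ to $v$; for $S\subseteq V(D)$, $I(S)=\bigcup_{u,v\in S}(I(u,v)\cup I(v,u))$. A geodetic set of $D$ is a set $S\subseteq V(D)$ with $I(S)=V(D)$. *)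

(* Defs.v *)
(* A digraph on a finite vertex type V is a relation
   arc : rel V (arc u v = there is an arc u -> v); no parallel arcs by
   construction, loops excluded by an irreflexivity hypothesis. *)
From mathcomp Require Import all_boot.
Set Implicit Arguments. Unset Strict Implicit. Unset Printing Implicit Defensive.

Section Digraph.
Variables (V : finType) (arc : rel V).

Definition uadj : rel V := fun u v => arc u v || arc v u.

(* underlying undirected graph is a tree: connected and acyclic
   (no cycle on >= 3 distinct vertices) *)
Definition ditree : Prop :=
  (forall x y : V, connect uadj x y) /\
  (forall c : seq V, uniq c -> 2 < size c -> ~~ cycle uadj c).

Definition scc (S : {set V}) : Prop :=
  exists x : V, S = [set y | connect arc x y && connect arc y x].

Definition source_set (S : {set V}) : Prop :=
  scc S /\ (forall u v, arc u v -> v \in S -> u \in S).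

Definition sink_set (S : {set V}) : Prop :=
  scc S /\ (forall u v, arc u v -> u \in S -> v \in S).

(* p is a shortest directed path from u to v (as the vertex list u :: p) *)
Definition shortest_path (u v : V) (p : seq V) : Prop :=
  path arc u p /\ last u p = v /\
  (forall q : seq V, path arc u q -> last u q = v -> size p <= size q).

Definition in_interval (u v w : V) : Prop :=
  exists p : seq V, shortest_path u v p /\ w \in u :: p.

Definition geodetic (S : {set V}) : Prop :=
  forall w : V, exists u v : V,
    [/\ u \in S, v \in S & (in_interval u v w \/ in_interval v u w)].

End Digraph.

(* Main.v *)
Require Import Defs.
From mathcomp Require Import all_boot.

Lemma back_closed (V : finType) (arc : rel V) (S : {set V}) :
  (forall u v, arc u v -> v \in S -> u \in S) ->
  forall p a x, path arc a p -> x \in a :: p -> x \in S -> a \in S.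
Proof.
move=> cl; elim=> [|y p IH] a x /=.
  by move=> _; rewrite inE => /eqP ->.
case/andP=> ay py; rewrite inE => /orP [/eqP -> //|xin] xS.
exact: (cl a y ay (IH y x py xin xS)).
Qed.

Lemma fwd_closed (V : finType) (arc : rel V) (S : {set V}) :
  (forall u v, arc u v -> u \in S -> v \in S) ->
  forall p a, a \in S -> path arc a p -> last a p \in S.
Proof.
move=> cl; elim=> [|y p IH] a //= aS /andP [ay py].
exact: (IH y (cl a y ay aS) py).
Qed.

Lemma fwd2 (V : finType) (arc : rel V) (S : {set V}) :
  (forall u v, arc u v -> u \in S -> v \in S) ->
  forall p a x, path arc a p -> x \in a :: p -> x \in S -> last a p \in S.
Proof.
move=> cl; elim=> [|y p IH] a x /=.
  by move=> _; rewrite inE => /eqP ->.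
case/andP=> ay py; rewrite inE => /orP [/eqP ->|xin] xS.
  have := @fwd_closed V arc S cl (y :: p) a xS; rewrite /= ay py; exact.
exact: (IH y x py xin xS).
Qed.

Theorem lemma2 (V : finType) (arc : rel V) :
  irreflexive arc -> ditree arc ->
  forall S : {set V}, source_set arc S \/ sink_set arc S ->
  forall G : {set V}, geodetic arc G ->
  exists x : V, x \in G /\ x \in S.
Proof.
move=> _ _ S HS G HG.
have [x xS] : exists x, x \in S.
  case: HS => [[[x ->] _]|[[x ->] _]]; exists x; by rewrite inE connect0.
have key : forall a b, in_interval arc a b x -> a \in S \/ b \in S.
  move=> a b [p [[pp [lp _]] xin]].
  case: HS => [[_ cl]|[_ cl]].
    by left; exact: (@back_closed _ _ _ cl _ _ _ pp xin xS).
  by right; rewrite -lp; exact: (@fwd2 _ _ _ cl _ _ _ pp xin xS).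
have [u [v [uG vG H]]] := HG x.
case: H => /key [] ?; by [exists u | exists v].
Qed.
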